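(* Let $(M,d,+)$ be a metric semigroup, $f:I_a^b\to M$, $x,y\in I_a^b$ with $x<y$, and $x'\in I_x^y$. Define $\lambda,\mu\in\mathbb N_0^n$ by $\lambda_i=1$ if $x_i=x_i'$, $\lambda_i=0$ if $x_i<x_i'$; and $\mu_i=0$ if $x_i'=y_i$, $\mu_i=1$ if $x_i'<y_i$. Then $\lambda\le\mu$, $$I_x^y=\bigcup_{\alpha\in\mathbb N_0^n,\ \lambda\le\alpha\le\mu}I_{x+\alpha(x'-x)}^{x'+\alpha(y-x')},$$ where the rectangles in the union are non-degenerate with pairwise disjoint interiors, and $$\mathrm{md}_n(f,I_x^y)\le\sum_{\lambda\le\alpha\le\mu}\mathrm{md}_n\big(f,I_{x+\alpha(x'-x)}^{x'+\alpha(y-x')}\big).$$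
   Context: Fix $n\in\mathbb N$ and $a,b\in\mathbb R^n$ with $a<b$. Inequalities between points of $\mathbb R^n$ or multiindices are componentwise; $0$ and $1$ denote $(0,\dots,0)$ and $(1,\dots,1)$; for $x\le y$, $I_x^y=\prod_{i=1}^n[x_i,y_i]$; for $\theta\in\mathbb N_0^n$, $\theta x=(\theta_1x_1,\dots,\theta_nx_n)$, $|\theta|=\sum\theta_i$; $\mathcal E(n)$, $\mathcal O(n)$ are the sets of $\theta\in\mathbb N_0^n$, $\theta\le1$, with $|\theta|$ even, resp. odd. A metric semigroup $(M,d,+)$ is a metric space with an Abelian semigroup operation $+$ such that $d(u+w,v+w)=d(u,v)$. For $x\le y$ in $I_a^b$, $\mathrm{md}_n(f,I_x^y)=d\big(\sum_{\theta\in\mathcal E(n)}f(x+\theta(y-x)),\sum_{\eta\in\mathcal O(n)}f(x+\eta(y-x))\big)$. *)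

(* Defs.v *)
From Stdlib Require Import Reals.
From mathcomp Require Import all_boot.
Local Open Scope R_scope.
Set Implicit Arguments.
Unset Strict Implicit.
Unset Printing Implicit Defensive.

Record MetricSemigroup := {
  ms_car :> Type;
  ms_d : ms_car -> ms_car -> R;
  ms_add : ms_car -> ms_car -> ms_car;
  ms_d_eq0 : forall u v, ms_d u v = R0 <-> u = v;
  ms_d_sym : forall u v, ms_d u v = ms_d v u;
  ms_d_tri : forall u v w, (ms_d u w <= ms_d u v + ms_d v w);
  ms_addA : forall u v w, ms_add u (ms_add v w) = ms_add (ms_add u v) w;
  ms_addC : forall u v, ms_add u v = ms_add v u;
  ms_d_trans : forall u v w, ms_d (ms_add u w) (ms_add v w) = ms_d u v
}.

Definition pt (n : nat) := 'I_n -> R.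

(* Multiindices theta in N_0^n with theta <= 1 are encoded as boolean
   finite functions; theta_i = nat_of_bool (theta i). *)
Definition mind (n : nat) := {ffun 'I_n -> bool}.

Definition smul n (th : mind n) (x : pt n) : pt n :=
  fun i => (INR (nat_of_bool (th i)) * x i).
Definition padd n (x y : pt n) : pt n := fun i => (x i + y i).
Definition psub n (x y : pt n) : pt n := fun i => (x i - y i).

Definition mabs n (th : mind n) : nat := \sum_(i < n) nat_of_bool (th i).

Definition Ecal n : seq (mind n) := [seq th <- enum {: mind n} | ~~ odd (mabs th)].
Definition Ocal n : seq (mind n) := [seq th <- enum {: mind n} | odd (mabs th)].

(* Sum in the (possibly identity-free) semigroup of a nonempty list;
   the default d0 is only used for the empty list (never, for n >= 1). *)
Definition sgsum (M : MetricSemigroup) (d0 : M) (s : seq M) : M :=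
  match s with
  | [::] => d0
  | h :: t => foldl (@ms_add M) h t
  end.

Definition md (M : MetricSemigroup) n (f : pt n -> M) (x y : pt n) : R :=
  @ms_d M (sgsum (f x) [seq f (padd x (smul th (psub y x))) | th <- Ecal n])
         (sgsum (f x) [seq f (padd x (smul et (psub y x))) | et <- Ocal n]).

Definition inI n (x y z : pt n) : Prop := forall i, (x i <= z i <= y i).
Definition inIo n (x y z : pt n) : Prop := forall i, (x i < z i < y i).

Definition mle n (al be : mind n) : Prop :=
  forall i, (nat_of_bool (al i) <= nat_of_bool (be i))%N.

Definition lam n (x x' : pt n) : mind n :=
  [ffun i => if Req_EM_T (x i) (x' i) then true else false].
Definition mu n (x' y : pt n) : mind n :=
  [ffun i => if Req_EM_T (x' i) (y i) then false else true].

Definition lo n (x x' : pt n) (al : mind n) : pt n := padd x (smul al (psub x' x)).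
Definition hi n (x' y : pt n) (al : mind n) : pt n := padd x' (smul al (psub y x')).

(* Main.v *)
Require Import Defs.
From Stdlib Require Import Reals.
From mathcomp Require Import all_boot.
From Stdlib Require Import Lra FunctionalExtensionality.
From mathcomp Require Import all_order all_algebra.
Set Implicit Arguments. Unset Strict Implicit. Unset Printing Implicit Defensive.

Section Comb.
Import GRing.Theory Num.Theory.
Local Open Scope ring_scope.
Variable n : nat.
Definition code := {ffun 'I_n -> nat}.

Lemma count_nat_sum (h : mind n -> code) g (q : pred (mind n)) :
  count_mem g [seq h th | th <- [seq th <- enum {: mind n} | q th]] =
  (\sum_(th | q th) (h th == g : nat))%N.
Proof.
rewrite count_map count_filter -sum1_count big_enum_cond big_mkcond /=.
rewrite [RHS]big_mkcond /=.
by apply: eq_bigr => th _; case: (q th); case: (h th == g); rewrite ?andbF.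
Qed.

Lemma count_sign (h : mind n -> code) g :
  ((count_mem g (map h (Ecal n)))%:R : int) - (count_mem g (map h (Ocal n)))%:R
  = \sum_(th : mind n) (-1) ^+ (mabs th) * ((h th == g : nat)%:R : int).
Proof.
rewrite /Ecal /Ocal !count_nat_sum !natr_sum.
rewrite [RHS](bigID (fun th => odd (mabs th))) /= addrC.
congr (_ + _).
  by apply: eq_bigr => th /negbTE ho; rewrite -signr_odd ho mul1r.
by rewrite -sumrN; apply: eq_bigr => th ho; rewrite -signr_odd ho mulN1r.
Qed.

Definition cc (l m a t : bool) : nat := if l || ~~ m then (2 * t)%N else (a + t)%N.

Lemma coord (l m : bool) (k : nat) : (l <= m)%N ->
 \sum_(a : bool | (l <= a <= m)%N) \sum_(t : bool) (-1)^+(t:nat) * ((cc l m a t == k : nat)%:R : int)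
 = \sum_(t:bool) (-1)^+(t:nat) * (((2 * t)%N == k : nat)%:R).
Proof.
case: l; case: m => //= _; rewrite big_mkcond !big_bool /= /cc /=;
  case: k => [|[|[|k]]]; rewrite /= ?expr0 ?expr1; by [].
Qed.

Lemma sign_prod (th : mind n) : (-1)^+(mabs th) = \prod_i (-1)^+(th i : nat) :> int.
Proof. by rewrite /mabs (big_morph (fun m => (-1)^+m : int) (fun a b => exprD _ a b) (expr0 _)). Qed.

Lemma eq_prod (c g : code) : ((c == g : nat)%:R : int) = \prod_i ((c i == g i : nat)%:R).
Proof.
case: eqP => [->|ne]; first by rewrite big1 // => i _; rewrite eqxx.
case: (pickP (fun i => c i != g i)) => [i hi|all].
  by rewrite (bigD1 i) //= (negbTE hi) mul0r.
by case: ne; apply/ffunP => i; apply/eqP; move: (all i) => /= /negbFE.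
Qed.

Definition c0 (th : mind n) : code := [ffun i => (2 * th i)%N].
Definition cal (lam mu al th : mind n) : code := [ffun i => cc (lam i) (mu i) (al i) (th i)].

Lemma distrA (F : 'I_n -> bool -> int) :
  \sum_(th : mind n) \prod_i F i (th i) = \prod_i \sum_(t:bool) F i t.
Proof. by rewrite bigA_distr_bigA. Qed.

Lemma main_int (lam mu : mind n) g : (forall i, lam i <= mu i)%N ->
 \sum_(th : mind n) (-1)^+(mabs th) * ((c0 th == g : nat)%:R : int)
 = \sum_(al : mind n | [forall i, (lam i <= al i <= mu i)%N])
     \sum_(th : mind n) (-1)^+(mabs th) * ((cal lam mu al th == g : nat)%:R).
Proof.
move=> hlm.
transitivity (\prod_i \sum_(t : bool) (-1)^+(t:nat) * (((2*t)%N == g i : nat)%:R : int)).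
  rewrite -distrA; apply: eq_bigr => th _; rewrite sign_prod eq_prod -big_split /=.
  by apply: eq_bigr => i _; rewrite ffunE.
transitivity (\prod_i \sum_(a : bool | (lam i <= a <= mu i)%N) \sum_(t:bool)
   (-1)^+(t:nat) * ((cc (lam i) (mu i) a t == g i : nat)%:R : int)).
  by apply: eq_bigr => i _; rewrite coord.
rewrite bigA_distr_big_dep.
apply: congr_big => // al _.
rewrite -distrA; apply: eq_bigr => th _; rewrite sign_prod eq_prod -big_split /=.
by apply: eq_bigr => i _; rewrite ffunE.
Qed.

Definition Aset (lam mu : mind n) :=
  [seq al <- index_enum (mind n) | [forall i, (lam i <= (al : mind n) i <= mu i)%N]].

Lemma perm_codes (lam mu : mind n) : (forall i, lam i <= mu i)%N ->
 perm_eq ([seq c0 th | th <- Ecal n] ++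
           flatten [seq [seq cal lam mu al th | th <- Ocal n] | al <- Aset lam mu])
         ([seq c0 th | th <- Ocal n] ++
           flatten [seq [seq cal lam mu al th | th <- Ecal n] | al <- Aset lam mu]).
Proof.
move=> hlm; apply/allP => g _; apply/eqP.
rewrite !count_cat !count_flatten !sumnE !big_map /Aset !big_filter.
apply/eqP; rewrite -(@eqr_nat int) !natrD !natr_sum.
have := main_int g hlm; have H : ((count_mem g [seq c0 th | th <- Ecal n])%:R : int) -
   (count_mem g [seq c0 th | th <- Ocal n])%:R =
  \sum_(al | [forall i, (lam i <= (al : mind n) i <= mu i)%N])
     ((count_mem g [seq cal lam mu al th | th <- Ecal n])%:R -
      (count_mem g [seq cal lam mu al th | th <- Ocal n])%:R).
  rewrite (count_sign c0) (main_int g hlm); apply: eq_bigr => al _.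
  by rewrite (count_sign (cal lam mu al)).
move: H; rewrite sumrB => H.
by rewrite -subr_eq0 opprD addrACA H addrA subrK subrr.
Qed.
End Comb.

Local Open Scope R_scope.

Section Semi.
Variable M : MetricSemigroup.
Notation oadd := (oAC (@ms_addA M) (@ms_addC M)).

Lemma oadd_some (u : M) (v : option M) : exists w, oadd (Some u) v = Some w.
Proof. by case: v => [v|]; eexists. Qed.

Lemma foldl_S (t : seq M) (acc : M) :
  oadd (Some acc) (\big[oadd/None]_(u <- t) Some u) = Some (foldl (@ms_add M) acc t).
Proof.
elim: t acc => [|h t IH] acc; first by rewrite big_nil.
by rewrite big_cons Monoid.mulmA /= -IH.
Qed.

Lemma sgsum_S (d0 : M) (s : seq M) :
  sgsum d0 s = odflt d0 (\big[oadd/None]_(u <- s) Some u).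
Proof. by case: s => [|h t]; rewrite ?big_nil // big_cons foldl_S. Qed.

Lemma d_add (u v p q : M) :
  ms_d (ms_add u p) (ms_add v q) <= ms_d u v + ms_d p q.
Proof.
apply: Rle_trans (ms_d_tri _ (ms_add v p) _) _.
rewrite ms_d_trans (ms_addC v p) (ms_addC v q) ms_d_trans; lra.
Qed.

Lemma big_some I (i : I) r (F : I -> option M) : (forall i, F i <> None) ->
  exists w, \big[oadd/None]_(j <- i :: r) F j = Some w.
Proof.
move=> hF; rewrite big_cons; move: (hF i); case: (F i) => // u _; exact: oadd_some.
Qed.

Lemma big_le (d0 : M) I (r : seq I) (Fe Fo : I -> option M) :
 (forall i, Fe i <> None) -> (forall i, Fo i <> None) ->
 ms_d (odflt d0 (\big[oadd/None]_(i <- r) Fe i)) (odflt d0 (\big[oadd/None]_(i <- r) Fo i))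
   <= \big[Rplus/R0]_(i <- r) ms_d (odflt d0 (Fe i)) (odflt d0 (Fo i)).
Proof.
move=> hE hO; elim: r => [|i r IH].
  rewrite !big_nil /=; right; by apply/ms_d_eq0.
rewrite !big_cons.
move: (hE i) (hO i); case: (Fe i) => // u _; case: (Fo i) => // v _ /=.
case: r IH => [|j r] IH.
  rewrite !big_nil /=; lra.
have [p Hp] := big_some j r hE; have [q Hq] := big_some j r hO.
rewrite Hp Hq /= in IH *.
apply: Rle_trans (d_add _ _ _ _) _; lra.
Qed.
End Semi.

Local Open Scope R_scope.

Section Pts.
Variables (n : nat) (x x' y : pt n).
Definition P (g : code n) : pt n :=
  fun i => if g i == 0%N then x i else if g i == 1%N then x' i else y i.

Lemma pt_big th : padd x (smul th (psub y x)) = P (c0 th).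
Proof.
apply: functional_extensionality => i; rewrite /padd /smul /psub /P /c0 ffunE.
case: (th i) => /=; lra.
Qed.

Lemma pt_sub al th : mle (lam x x') al -> mle al (mu x' y) ->
  padd (lo x x' al) (smul th (psub (hi x' y al) (lo x x' al))) =
  P (cal (lam x x') (mu x' y) al th).
Proof.
move=> h1 h2; apply: functional_extensionality => i; move: (h1 i) (h2 i).
rewrite /padd /smul /psub /P /cal /lo /hi /cc /lam /mu /padd /smul /psub !ffunE.
case: (Req_EM_T (x i) (x' i)) => e1; case: (Req_EM_T (x' i) (y i)) => e2;
  case: (al i); case: (th i) => /= hh1 hh2; try discriminate; lra.
Qed.
End Pts.

Notation oaddM M := (oAC (@ms_addA M) (@ms_addC M)).

Lemma S_some (M : MetricSemigroup) n (F : code n -> M) (l : seq (code n)) : l <> [::] ->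
  exists w, \big[oaddM M/None]_(g <- l) Some (F g) = Some w.
Proof. by case: l => // g l _; rewrite big_cons; apply: oadd_some. Qed.

Lemma Ecal_ne n : Ecal n <> [::].
Proof.
have : [ffun=> false] \in Ecal n.
  rewrite mem_filter mem_enum andbT /mabs big1 // => i _; by rewrite ffunE.
by case: (Ecal n).
Qed.

Lemma Ocal_ne n : (0 < n)%N -> Ocal n <> [::].
Proof.
move=> hn; have : [ffun i => i == Ordinal hn] \in Ocal n.
  rewrite mem_filter mem_enum andbT /mabs (bigD1 (Ordinal hn)) //= ffunE eqxx.
  rewrite big1 // => j /negbTE h; by rewrite ffunE h.
by case: (Ocal n).
Qed.

Theorem lemma11 (M : MetricSemigroup) (n : nat) (hn : (0 < n)%N)
  (a b : pt n) (hab : forall i, (a i < b i))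
  (f : pt n -> M) (x y x' : pt n)
  (hx : inI a b x) (hy : inI a b y) (hxy : forall i, (x i < y i))
  (hx' : inI x y x') :
  mle (lam x x') (mu x' y) /\
  (forall z, inI x y z <->
     exists al : mind n, mle (lam x x') al /\ mle al (mu x' y) /\
                         inI (lo x x' al) (hi x' y al) z) /\
  (forall al : mind n, mle (lam x x') al -> mle al (mu x' y) ->
     forall i, (lo x x' al i < hi x' y al i)) /\
  (forall al be : mind n, mle (lam x x') al -> mle al (mu x' y) ->
     mle (lam x x') be -> mle be (mu x' y) -> al <> be ->
     ~ (exists z, inIo (lo x x' al) (hi x' y al) z /\ inIo (lo x x' be) (hi x' y be) z)) /\
  (md f x y <=
     \big[Rplus/R0]_(al : mind n | [forall i, (lam x x' i <= al i <= mu x' y i)%N])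
        md f (lo x x' al) (hi x' y al)).
Proof.
have hlm : mle (lam x x') (mu x' y).
  move=> i; move: (hxy i) (hx' i); rewrite /lam /mu !ffunE.
  by case: (Req_EM_T (x i) (x' i)) => e1; case: (Req_EM_T (x' i) (y i)) => e2 //= h1 h2; lra.
split; first exact: hlm.
split.
  move=> z; split.
    move=> hz; exists [ffun i => if Rlt_dec (z i) (x' i) then false else mu x' y i].
    split; [|split].
    - move=> i; move: (hz i) (hxy i) (hx' i); rewrite /lam /mu !ffunE.
      case: (Req_EM_T (x i) (x' i)) => e1; case: (Req_EM_T (x' i) (y i)) => e2;
        case: (Rlt_dec (z i) (x' i)) => e3 //= h1 h2 h3; lra.
    - move=> i; move: (hz i) (hxy i) (hx' i); rewrite /lam /mu !ffunE.
      case: (Req_EM_T (x i) (x' i)) => e1; case: (Req_EM_T (x' i) (y i)) => e2;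
        case: (Rlt_dec (z i) (x' i)) => e3 //= h1 h2 h3; lra.
    - move=> i; move: (hz i) (hxy i) (hx' i);
        rewrite /lo /hi /padd /smul /psub /lam /mu !ffunE.
      case: (Req_EM_T (x i) (x' i)) => e1; case: (Req_EM_T (x' i) (y i)) => e2;
        case: (Rlt_dec (z i) (x' i)) => e3 /= h1 h2 h3; lra.
  move=> [al [h1 [h2 h3]]] i; move: (h1 i) (h2 i) (h3 i) (hxy i) (hx' i).
  rewrite /lo /hi /padd /smul /psub /lam /mu !ffunE.
  case: (Req_EM_T (x i) (x' i)) => e1; case: (Req_EM_T (x' i) (y i)) => e2;
    case: (al i) => /= g1 g2 g3 g4 g5; try discriminate; lra.
split.
  move=> al h1 h2 i; move: (h1 i) (h2 i) (hxy i) (hx' i).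
  rewrite /lo /hi /padd /smul /psub /lam /mu !ffunE.
  case: (Req_EM_T (x i) (x' i)) => e1; case: (Req_EM_T (x' i) (y i)) => e2;
    case: (al i) => /= g1 g2 g4 g5; try discriminate; lra.
split.
  move=> al be _ _ _ _ ne [z [hz1 hz2]].
  case: (pickP (fun i => al i != be i)) => [i /= hi|all]; last first.
    by apply: ne; apply/ffunP => i; apply/eqP; move: (all i) => /= /negbFE.
  move: (hz1 i) (hz2 i) hi; rewrite /lo /hi /padd /smul /psub.
  case: (al i); case: (be i) => //= g1 g2 _; lra.
pose lm := lam x x'; pose mm := mu x' y.
pose F := fun g : code n => f (P x x' y g).
pose S := fun l : seq (code n) => \big[oaddM M/None]_(g <- l) Some (F g).
pose GE := fun al => S [seq cal lm mm al th | th <- Ecal n].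
pose GO := fun al => S [seq cal lm mm al th | th <- Ocal n].
have hGE al : GE al <> None.
  have Hne : [seq cal lm mm al th | th <- Ecal n] <> [::].
    by case: (Ecal n) (@Ecal_ne n).
  by have [w Hw] := S_some F Hne; rewrite /GE /S Hw.
have hGO al : GO al <> None.
  have Hne : [seq cal lm mm al th | th <- Ocal n] <> [::].
    by case: (Ocal n) (Ocal_ne hn).
  by have [w Hw] := S_some F Hne; rewrite /GO /S Hw.
have hA : lm \in Aset lm mm.
  rewrite mem_filter mem_index_enum andbT; apply/forallP => i.
  by rewrite leqnn /=; apply: hlm.
have [e He] : exists e, S [seq c0 th | th <- Ecal n] = Some e.
  by apply: S_some; case: (Ecal n) (@Ecal_ne n).
have [o Ho] : exists o, S [seq c0 th | th <- Ocal n] = Some o.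
  by apply: S_some; case: (Ocal n) (Ocal_ne hn).
have SEA : S (flatten [seq [seq cal lm mm al th | th <- Ecal n] | al <- Aset lm mm])
   = \big[oaddM M/None]_(al <- Aset lm mm) GE al by rewrite /S big_flatten big_map.
have SOA : S (flatten [seq [seq cal lm mm al th | th <- Ocal n] | al <- Aset lm mm])
   = \big[oaddM M/None]_(al <- Aset lm mm) GO al by rewrite /S big_flatten big_map.
have E : oaddM M (S [seq c0 th | th <- Ecal n]) (\big[oaddM M/None]_(al <- Aset lm mm) GO al)
   = oaddM M (S [seq c0 th | th <- Ocal n]) (\big[oaddM M/None]_(al <- Aset lm mm) GE al).
  rewrite -SEA -SOA /S -!big_cat; apply: perm_big; exact: perm_codes.
have Hmd : md f x y = ms_d (odflt (f x) (S [seq c0 th | th <- Ecal n]))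
                           (odflt (f x) (S [seq c0 th | th <- Ocal n])).
  rewrite /md !sgsum_S /S !big_map; congr (ms_d (odflt _ _) (odflt _ _));
    by apply: eq_bigr => th _; rewrite /F (pt_big x x' y).
have Hsub : \big[Rplus/R0]_(al : mind n | [forall i, (lam x x' i <= al i <= mu x' y i)%N])
        md f (lo x x' al) (hi x' y al) =
    \big[Rplus/R0]_(al <- Aset lm mm) ms_d (odflt (f x) (GE al)) (odflt (f x) (GO al)).
  rewrite /Aset big_filter; apply: eq_bigr => al /forallP hal.
  have h1 : mle lm al by move=> i; case/andP: (hal i).
  have h2 : mle al mm by move=> i; case/andP: (hal i).
  have D : forall (u : option M) d1 d2, u <> None -> odflt d1 u = odflt d2 u.
    by move=> [u|] d1 d2.
  rewrite /md !sgsum_S !big_map.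
  have -> : \big[oaddM M/None]_(j <- Ecal n)
      Some (f (padd (lo x x' al) (smul j (psub (hi x' y al) (lo x x' al))))) = GE al.
    by rewrite /GE /S big_map; apply: eq_bigr => th _; rewrite /F pt_sub.
  have -> : \big[oaddM M/None]_(j <- Ocal n)
      Some (f (padd (lo x x' al) (smul j (psub (hi x' y al) (lo x x' al))))) = GO al.
    by rewrite /GO /S big_map; apply: eq_bigr => th _; rewrite /F pt_sub.
  by rewrite (D _ _ (f x) (hGE al)) (D _ _ (f x) (hGO al)).
rewrite Hmd Hsub; clearbody GE GO S.
move: E He Ho; move: (S [seq c0 th | th <- Ecal n]) (S [seq c0 th | th <- Ocal n]) => sE sO E HsE HsO; subst sE sO.
move: E SEA SOA; case: (Aset lm mm) hA => // al0 r _ E SEA SOA.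
have [ea Hea] := big_some al0 r hGE.
have [oa Hoa] := big_some al0 r hGO.
rewrite Hea Hoa /= in E; case: E => E.
have -> : ms_d e o = ms_d ea oa.
  rewrite -(ms_d_trans e o oa) E ms_addC (ms_addC o oa); exact: ms_d_trans.
have := @big_le M (f x) _ (al0 :: r) GE GO hGE hGO.
by rewrite Hea Hoa.
Qed.
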